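(* Consider the semi-discrete system $\frac{d\mathbf{u}}{dt}=\mathbf{R}(\mathbf{u})+\mathbf{B}(t)\mathbf{u}$ and the integrating-factor third-order SSPRK scheme $\mathbf{u}^{(1)}=e^{\mathbf{C}(t_n,\Delta t)}[\mathbf{u}^n+\Delta t\,\mathbf{R}(\mathbf{u}^n)]$, $\mathbf{u}^{(2)}=\tfrac34 e^{\mathbf{C}(t_n,\Delta t/2)}\mathbf{u}^n+\tfrac14 e^{-\mathbf{C}(t_n+\Delta t/2,\Delta t/2)}[\mathbf{u}^{(1)}+\Delta t\,\mathbf{R}(\mathbf{u}^{(1)})]$, $\mathbf{u}^{n+1}=\tfrac13 e^{\mathbf{C}(t_n,\Delta t)}\mathbf{u}^n+\tfrac23 e^{\mathbf{C}(t_n+\Delta t/2,\Delta t/2)}[\mathbf{u}^{(2)}+\Delta t\,\mathbf{R}(\mathbf{u}^{(2)})]$ (which, when $\mathbf{B}$ is independent of $t$, reads with $e^{\mathbf{C}(t,\tau)}=e^{\tau\mathbf{B}}$). Assume the forward Euler scheme is positivity preserving, i.e. $\mathbf{u}\in\mathbb{U}_{\mathrm{ad}}$ implies $\mathbf{u}+\Delta t\,\mathbf{R}(\mathbf{u})\in\mathbb{U}_{\mathrm{ad}}$ for any $\Delta t\le\Delta t^*(\mathbf{u})$. Then this third-order SSPRK scheme is positivity preserving under the same restriction on the time step: if $\mathbf{u}^n\in\mathbb{U}_{\mathrm{ad}}$ and $\Delta t$ satisfies the forward Euler restriction at each stage, then $\mathbf{u}^{n+1}\in\mathbb{U}_{\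mathrm{ad}}$.
   Context: Ten-Moment equations in 2-D: conservative variable per grid point $\mathbf{u}=(\rho,\rho v_1,\rho v_2,E_{11},E_{12},E_{22})^\top$, pressure tensor $p_{11}=2E_{11}-\rho v_1^2$, $p_{12}=2E_{12}-\rho v_1v_2$, $p_{22}=2E_{22}-\rho v_2^2$. $\mathbb{U}_{\mathrm{ad}}=\{\mathbf{u}\in\mathbb{R}^6:\rho>0,\ \mathbf{p}\text{ positive definite}\}$; a vector of grid values is said to lie in $\mathbb{U}_{\mathrm{ad}}$ if the state at every grid point does. $\mathbf{R}$ is the spatial (finite difference) discretization of $-\partial_x\mathbf{f}-\partial_y\mathbf{g}$. The source is $\mathbf{B}(t)\mathbf{u}$ applied pointwise, with $\mathbf{B}(t)$ the $6\times6$ matrix whose only nonzero entries are $B_{21}=a$, $B_{31}=b$, $B_{42}=a$, $B_{52}=b/2$, $B_{53}=a/2$, $B_{63}=b$, where $a(t)=-\frac12\partial_xW$, $b(t)=-\frac12\partial_yW$ for a given potential $W(x,y,t)$ (evaluated at the grid point). $\mathbf{C}(t,\tau)=\int_t^{t+\tau}\mathbf{B}(s)\,ds$, and with $\hat a=\int_t^{t+\tau}a$, $\hat b=\int_t^{t+\tau}b$, $e^{\mathbf{C}(t,\tau)}$ is the lower-triangular matrix with unit diagonal and entries $(2,1)=\hat a$, $(3,1)=\hat b$, $(4,1)=\hat a^2/2$, $(4,2)=\hat a$, $(5,1)=\hat a\hat b/2$, $(5,2)=\hat b/2$, $(5,3)=\hat a/2$, $(6,1)=\hat b^2/2$, $(6,3)=\hat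 b$, all other entries zero. *)

(* Defs.v *)
From HB Require Import structures.
From mathcomp Require Import all_boot all_order all_algebra.
From mathcomp Require Import all_classical all_reals all_analysis.
Set Implicit Arguments. Unset Strict Implicit. Unset Printing Implicit Defensive.
Import Order.TTheory GRing.Theory Num.Theory.
Import numFieldNormedType.Exports.
Local Open Scope classical_set_scope.
Local Open Scope ring_scope.

Section TenMoment.
Variable R : realType.

Definition st_rho (u : 'cV[R]_6) := u (inord 0) 0.
Definition st_m1  (u : 'cV[R]_6) := u (inord 1) 0.
Definition st_m2  (u : 'cV[R]_6) := u (inord 2) 0.
Definition st_E11 (u : 'cV[R]_6) := u (inord 3) 0.
Definition st_E12 (u : 'cV[R]_6) := u (inord 4) 0.
Definition st_E22 (u : 'cV[R]_6) := u (inord 5) 0.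

Definition vel1 u := st_m1 u / st_rho u.
Definition vel2 u := st_m2 u / st_rho u.

Definition p11 u := 2 * st_E11 u - st_rho u * vel1 u ^+ 2.
Definition p12 u := 2 * st_E12 u - st_rho u * vel1 u * vel2 u.
Definition p22 u := 2 * st_E22 u - st_rho u * vel2 u ^+ 2.

Definition ptensor (u : 'cV[R]_6) : 'M[R]_2 :=
  \matrix_(i < 2, j < 2)
    if (i == j :> nat) then (if (i == 0%N :> nat) then p11 u else p22 u)
    else p12 u.

Definition posdef (P : 'M[R]_2) : Prop :=
  forall v : 'cV[R]_2, v != 0 -> 0 < (v^T *m P *m v) 0 0.

Definition Uad_pt (u : 'cV[R]_6) : Prop := 0 < st_rho u /\ posdef (ptensor u).

Definition Uad (G : finType) (U : G -> 'cV[R]_6) : Prop := forall g, Uad_pt (U g).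

(* e^{C} as a function of ahat = int a, bhat = int b (explicit lower-triangular matrix) *)
Definition expC_entry (ah bh : R) (i j : nat) : R :=
  if (i == j)%N then 1 else
  match i, j with
  | 1, 0 => ah
  | 2, 0 => bh
  | 3, 0 => ah ^+ 2 / 2
  | 3, 1 => ah
  | 4, 0 => ah * bh / 2
  | 4, 1 => bh / 2
  | 4, 2 => ah / 2
  | 5, 0 => bh ^+ 2 / 2
  | 5, 2 => bh
  | _, _ => 0
  end.

Definition expCmat (ah bh : R) : 'M[R]_6 :=
  \matrix_(i < 6, j < 6) expC_entry ah bh i j.

Definition coef_a (W : R -> R -> R -> R) (x y t : R) : R :=
  - (1/2) * derive1 (fun z => W z y t) x.
Definition coef_b (W : R -> R -> R -> R) (x y t : R) : R :=
  - (1/2) * derive1 (fun z => W x z t) y.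

Definition ahat W x y t tau : R :=
  Rintegral lebesgue_measure `[t, t + tau] (fun s => coef_a W x y s).
Definition bhat W x y t tau : R :=
  Rintegral lebesgue_measure `[t, t + tau] (fun s => coef_b W x y s).

Variable G : finType.
Variables (xg yg : G -> R) (W : R -> R -> R -> R).

(* e^{C(t,tau)} applied pointwise; since C is linear in (ahat,bhat),
   e^{-C(t,tau)} is expCmat (-ahat) (-bhat). *)
Definition applyExpC (t tau : R) (U : G -> 'cV[R]_6) : G -> 'cV[R]_6 :=
  fun g => expCmat (ahat W (xg g) (yg g) t tau) (bhat W (xg g) (yg g) t tau) *m U g.
Definition applyExpCneg (t tau : R) (U : G -> 'cV[R]_6) : G -> 'cV[R]_6 :=
  fun g => expCmat (- ahat W (xg g) (yg g) t tau) (- bhat W (xg g) (yg g) t tau) *m U g.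

Variable Rh : (G -> 'cV[R]_6) -> (G -> 'cV[R]_6).

Definition euler (dt : R) (U : G -> 'cV[R]_6) : G -> 'cV[R]_6 :=
  fun g => U g + dt *: Rh U g.

Definition stage1 (tn dt : R) U := applyExpC tn dt (euler dt U).
Definition stage2 (tn dt : R) U : G -> 'cV[R]_6 :=
  fun g => (3/4) *: applyExpC tn (dt/2) U g
         + (1/4) *: applyExpCneg (tn + dt/2) (dt/2) (euler dt (stage1 tn dt U)) g.
Definition ssprk3 (tn dt : R) U : G -> 'cV[R]_6 :=
  fun g => (1/3) *: applyExpC tn dt U g
         + (2/3) *: applyExpC (tn + dt/2) (dt/2) (euler dt (stage2 tn dt U)) g.

End TenMoment.

(* Main.v *)
Require Import Defs.
From HB Require Import structures.
From mathcomp Require Import all_boot all_order all_algebra.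
From mathcomp Require Import all_classical all_reals all_analysis.
From mathcomp Require Import ring lra.
Import Order.TTheory GRing.Theory Num.Theory.
Local Open Scope ring_scope.

Section S.
Variable R : realType.
Implicit Types u w : 'cV[R]_6.

Definition Fform u (z x y : R) : R :=
  st_rho u * z ^+ 2 + 2 * z * (st_m1 u * x + st_m2 u * y)
  + 2 * (st_E11 u * x ^+ 2 + 2 * st_E12 u * x * y + st_E22 u * y ^+ 2).
Definition Fpos u := forall z x y : R, (z != 0) || (x != 0) || (y != 0) -> 0 < Fform u z x y.
Definition Qf u (x y : R) := p11 u * x ^+ 2 + 2 * p12 u * x * y + p22 u * y ^+ 2.

Lemma quadE u (v : 'cV[R]_2) :
  (v^T *m ptensor u *m v) 0 0 = Qf u (v 0 0) (v (lift ord0 ord0) 0).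
Proof.
rewrite !mxE !big_ord_recl !big_ord0 !mxE !big_ord_recl !big_ord0 !mxE /Qf /=.
have -> : (0 : 'I_2) = ord0 by apply/val_inj.
ring.
Qed.

Lemma keyid u z x y : st_rho u != 0 ->
  st_rho u * Fform u z x y = (st_rho u * z + st_m1 u * x + st_m2 u * y) ^+ 2 + st_rho u * Qf u x y.
Proof. move=> h; rewrite /Fform /Qf /p11 /p12 /p22 /vel1 /vel2; field; exact: h. Qed.

Lemma Uad_Fpos u : Uad_pt u -> Fpos u.
Proof.
case=> hr hP z x y hnz.
have hr0 : st_rho u != 0 by rewrite gt_eqF.
have := keyid u z x y hr0.
have [/orP [hx|hy] | hxy] := boolP ((x != 0) || (y != 0)).
- set v : 'cV[R]_2 := \col_i (if (i : nat) == 0%N then x else y).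
  have hv : v != 0.
    apply/negP => /eqP /matrixP /(_ ord0 0); rewrite !mxE /=. by move/eqP; rewrite (negbTE hx).
  have := hP v hv; rewrite quadE !mxE /= => hQ.
  move=> e; have : 0 < st_rho u * Fform u z x y.
    rewrite e; apply: ltr_wpDl; first exact: sqr_ge0. by apply: mulr_gt0.
  by rewrite pmulr_rgt0.
- set v : 'cV[R]_2 := \col_i (if (i : nat) == 0%N then x else y).
  have hv : v != 0.
    apply/negP => /eqP /matrixP /(_ (lift ord0 ord0) 0); rewrite !mxE /=. by move/eqP; rewrite (negbTE hy).
  have := hP v hv; rewrite quadE !mxE /= => hQ.
  move=> e; have : 0 < st_rho u * Fform u z x y.
    rewrite e; apply: ltr_wpDl; first exact: sqr_ge0. by apply: mulr_gt0.
  by rewrite pmulr_rgt0.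
- move: hxy; rewrite negb_or !negbK => /andP [/eqP hx /eqP hy].
  move: hnz; rewrite hx hy eqxx !orbF => hz _.
  rewrite /Fform !(mulr0, mul0r, addr0, expr0n) /=.
  by rewrite mulr_gt0 // exprn_even_gt0 // hz.
Qed.
Lemma Fpos_Uad u : Fpos u -> Uad_pt u.
Proof.
move=> hF.
have hr : 0 < st_rho u.
  have := hF 1 0 0; rewrite oner_eq0 /= => /(_ isT).
  by have -> : Fform u 1 0 0 = st_rho u by rewrite /Fform; ring.
split=> // v hv.
have hr0 : st_rho u != 0 by rewrite gt_eqF.
set x := v 0 0; set y := v (lift ord0 ord0) 0.
have hxy : (x != 0) || (y != 0).
  rewrite -negb_and; apply/negP => /andP [/eqP hx /eqP hy]; move/eqP: hv; apply.
  apply/matrixP => i j; rewrite ord1 mxE; case: i => [[|[|//]]] hi.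
  - by rewrite -hx; by congr (fun_of_matrix v _ _); apply/val_inj.
  - by rewrite -hy; by congr (fun_of_matrix v _ _); apply/val_inj.
rewrite quadE -/y.
have -> : v 0 0 = x by [].
set z0 := - (st_m1 u * x + st_m2 u * y) / st_rho u.
have e := keyid u z0 x y hr0.
have e2 : st_rho u * z0 + st_m1 u * x + st_m2 u * y = 0 by rewrite /z0; field.
rewrite e2 (_ : (0:R) ^+ 2 = 0) ?add0r in e; last by rewrite expr2 mulr0.
rewrite -(pmulr_rgt0 _ hr) -e pmulr_rgt0 //; apply: hF; by rewrite -orbA hxy orbT.
Qed.

Lemma Fform_comb (a b : R) u w z x y :
  Fform (a *: u + b *: w) z x y = a * Fform u z x y + b * Fform w z x y.
Proof. rewrite /Fform /st_rho /st_m1 /st_m2 /st_E11 /st_E12 /st_E22 !mxE.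
move: (u (inord 0) 0) (u (inord 1) 0) (u (inord 2) 0) (u (inord 3) 0) (u (inord 4) 0) (u (inord 5) 0) (w (inord 0) 0) (w (inord 1) 0) (w (inord 2) 0) (w (inord 3) 0) (w (inord 4) 0) (w (inord 5) 0) => *. ring. Qed.

Lemma Fpos_comb (a b : R) u w : 0 < a -> 0 < b -> Fpos u -> Fpos w -> Fpos (a *: u + b *: w).
Proof.
move=> ha hb hu hw z x y h; rewrite Fform_comb; apply: addr_gt0; apply: mulr_gt0 => //.
exact: hu. exact: hw.
Qed.

Lemma sum6 (F : 'I_6 -> R) : \sum_(j < 6) F j =
  F (inord 0) + F (inord 1) + F (inord 2) + F (inord 3) + F (inord 4) + F (inord 5).
Proof.
rewrite !big_ord_recl big_ord0 addr0 !addrA.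
by congr (_ + _ + _ + _ + _ + _); congr F; apply/val_inj; rewrite /= inordK.
Qed.

Lemma mulE (a b : R) (u : 'cV[R]_6) (k : nat) : (k < 6)%N -> (expCmat a b *m u) (inord k) 0 =
  \sum_(j < 6) expC_entry a b k j * u j 0.
Proof. by move=> hk; rewrite !mxE; apply: eq_bigr => j _; rewrite !mxE inordK. Qed.

Lemma Fform_exp (a b : R) u z x y :
  Fform (expCmat a b *m u) z x y = Fform u (z + a * x + b * y) x y.
Proof.
rewrite /Fform /st_E12 /st_E11 /st_E22 /st_m1 /st_m2 /st_rho !mulE // !sum6 /expC_entry !inordK //=.
by field.
Qed.

Lemma Fpos_exp (a b : R) u : Fpos u -> Fpos (expCmat a b *m u).
Proof.
move=> hu z x y h; rewrite Fform_exp; apply: hu.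
have [hxy|] := boolP ((x != 0) || (y != 0)); first by rewrite -orbA hxy orbT.
rewrite negb_or !negbK => /andP [/eqP hx /eqP hy]; move: h; rewrite hx hy !mulr0 !addr0.
by [].
Qed.

End S.

Theorem theorem1 (R : realType) (G : finType) (xg yg : G -> R)
    (W : R -> R -> R -> R)
    (Rh : (G -> 'cV[R]_6) -> (G -> 'cV[R]_6))
    (dtstar : (G -> 'cV[R]_6) -> R)
    (hFE : forall U : G -> 'cV[R]_6, Uad U ->
             forall dt : R, 0 < dt -> dt <= dtstar U -> Uad (euler Rh dt U))
    (tn dt : R) (Un : G -> 'cV[R]_6) :
  Uad Un -> 0 < dt ->
  dt <= dtstar Un ->
  dt <= dtstar (stage1 xg yg W Rh tn dt Un) ->
  dt <= dtstar (stage2 xg yg W Rh tn dt Un) ->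
  Uad (ssprk3 xg yg W Rh tn dt Un).
Proof.
move=> hU hdt h0 h1 h2.
have hE0 := hFE Un hU dt hdt h0.
have hS1 : Uad (stage1 xg yg W Rh tn dt Un).
  by move=> g; apply/Fpos_Uad/Fpos_exp/Uad_Fpos/hE0.
have hE1 := hFE _ hS1 dt hdt h1.
have hS2 : Uad (stage2 xg yg W Rh tn dt Un).
  move=> g; rewrite /stage2 /applyExpCneg /applyExpC; apply/Fpos_Uad/Fpos_comb.
  - lra.
  - lra.
  - exact/Fpos_exp/Uad_Fpos/hU.
  - exact/Fpos_exp/Uad_Fpos/hE1.
have hE2 := hFE _ hS2 dt hdt h2.
move=> g; rewrite /ssprk3 /applyExpC; apply/Fpos_Uad/Fpos_comb.
- lra.
- lra.
- exact/Fpos_exp/Uad_Fpos/hU.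
- exact/Fpos_exp/Uad_Fpos/hE2.
Qed.
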